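(* Let $A$ be a commutative semiring (not necessarily idempotent), $M$ a flat $A$-module, and $v:A^n\to M$ a homomorphism from a finite free module. Suppose $f,g:A\to A^n$ are homomorphisms with $v\circ f=v\circ g$. Then there exist a finite free module $A^m$ and homomorphisms $u:A^n\to A^m$, $w:A^m\to M$ with $v=w\circ u$ and $u\circ f=u\circ g$.
   Context: Modules over a semiring $A$ are commutative monoids with a compatible $A$-action; the category is semiadditive and has a tensor product $\otimes_A$. An $A$-module $M$ is flat if the functor $-\otimes_A M$ is exact (preserves finite limits as well as finite colimits). *)

(* Defs.v *)
From HB Require Import structures.
From mathcomp Require Import all_boot all_order all_algebra.
Set Implicit Arguments. Unset Strict Implicit. Unset Printing Implicit Defensive.
Import GRing.Theory.
Local Open Scope ring_scope.

Section ModCat.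
Variable A : comPzSemiRingType.

Definition modhom (U V : lSemiModType A) (f : U -> V) : Prop :=
  [/\ f 0 = 0, (forall x y, f (x + y) = f x + f y)
    & (forall (a : A) x, f (a *: x) = a *: f x)].

Definition bilinear (U V W : lSemiModType A) (b : U -> V -> W) : Prop :=
  (forall y, modhom (fun x => b x y)) /\ (forall x, modhom (b x)).

Definition is_tensor (U V T : lSemiModType A) (t : U -> V -> T) : Prop :=
  bilinear t /\
  forall (P : lSemiModType A) (b : U -> V -> P), bilinear b ->
    (exists h : T -> P, modhom h /\ forall x y, h (t x y) = b x y) /\
    (forall h h' : T -> P, modhom h -> modhom h' ->
       (forall x y, h (t x y) = b x y) -> (forall x y, h' (t x y) = b x y) ->
       forall z, h z = h' z).

Definition tensor_map (U U' M T T' : lSemiModType A) (t : U -> M -> T)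
  (t' : U' -> M -> T') (f : U -> U') (h : T -> T') : Prop :=
  modhom h /\ forall x y, h (t x y) = t' (f x) y.

Definition is_terminal (Z : lSemiModType A) : Prop :=
  forall X : lSemiModType A,
    (exists h : X -> Z, modhom h) /\
    (forall h h' : X -> Z, modhom h -> modhom h' -> forall x, h x = h' x).

Definition is_initial (Z : lSemiModType A) : Prop :=
  forall X : lSemiModType A,
    (exists h : Z -> X, modhom h) /\
    (forall h h' : Z -> X, modhom h -> modhom h' -> forall x, h x = h' x).

Definition is_product (N1 N2 P : lSemiModType A) (p1 : P -> N1) (p2 : P -> N2) : Prop :=
  [/\ modhom p1, modhom p2 &
  forall (X : lSemiModType A) (k1 : X -> N1) (k2 : X -> N2), modhom k1 -> modhom k2 ->
    (exists h : X -> P, [/\ modhom h, forall x, p1 (h x) = k1 x & forall x, p2 (h x) = k2 x]) /\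
    (forall h h' : X -> P, modhom h -> modhom h' ->
       (forall x, p1 (h x) = k1 x) -> (forall x, p2 (h x) = k2 x) ->
       (forall x, p1 (h' x) = k1 x) -> (forall x, p2 (h' x) = k2 x) ->
       forall x, h x = h' x)].

Definition is_coproduct (N1 N2 C : lSemiModType A) (i1 : N1 -> C) (i2 : N2 -> C) : Prop :=
  [/\ modhom i1, modhom i2 &
  forall (X : lSemiModType A) (k1 : N1 -> X) (k2 : N2 -> X), modhom k1 -> modhom k2 ->
    (exists h : C -> X, [/\ modhom h, forall x, h (i1 x) = k1 x & forall x, h (i2 x) = k2 x]) /\
    (forall h h' : C -> X, modhom h -> modhom h' ->
       (forall x, h (i1 x) = k1 x) -> (forall x, h (i2 x) = k2 x) ->
       (forall x, h' (i1 x) = k1 x) -> (forall x, h' (i2 x) = k2 x) ->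
       forall x, h x = h' x)].

Definition is_equalizer (N N' E : lSemiModType A) (f g : N -> N') (e : E -> N) : Prop :=
  [/\ modhom e, (forall x, f (e x) = g (e x)) &
  forall (X : lSemiModType A) (k : X -> N), modhom k -> (forall x, f (k x) = g (k x)) ->
    (exists h : X -> E, modhom h /\ forall x, e (h x) = k x) /\
    (forall h h' : X -> E, modhom h -> modhom h' ->
       (forall x, e (h x) = k x) -> (forall x, e (h' x) = k x) ->
       forall x, h x = h' x)].

Definition is_coequalizer (N N' Q : lSemiModType A) (f g : N -> N') (q : N' -> Q) : Prop :=
  [/\ modhom q, (forall x, q (f x) = q (g x)) &
  forall (X : lSemiModType A) (k : N' -> X), modhom k -> (forall x, k (f x) = k (g x)) ->
    (exists h : Q -> X, modhom h /\ forall x, h (q x) = k x) /\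
    (forall h h' : Q -> X, modhom h -> modhom h' ->
       (forall x, h (q x) = k x) -> (forall x, h' (q x) = k x) ->
       forall x, h x = h' x)].

(* M is flat: the functor - (x)_A M preserves finite limits (terminal object,
   binary products, equalizers) and finite colimits (initial object, binary
   coproducts, coequalizers).  Since tensor products are unique up to unique
   isomorphism, we quantify over all choices of tensor products. *)
Definition flat (M : lSemiModType A) : Prop :=
  (forall (Z TZ : lSemiModType A) (tZ : Z -> M -> TZ),
     is_terminal Z -> is_tensor tZ -> is_terminal TZ) /\
  (forall (Z TZ : lSemiModType A) (tZ : Z -> M -> TZ),
     is_initial Z -> is_tensor tZ -> is_initial TZ) /\
  (forall (N1 N2 P T1 T2 TP : lSemiModType A) (p1 : P -> N1) (p2 : P -> N2)
          (t1 : N1 -> M -> T1) (t2 : N2 -> M -> T2) (tP : P -> M -> TP)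
          (p1' : TP -> T1) (p2' : TP -> T2),
     is_product p1 p2 -> is_tensor t1 -> is_tensor t2 -> is_tensor tP ->
     tensor_map tP t1 p1 p1' -> tensor_map tP t2 p2 p2' ->
     is_product p1' p2') /\
  (forall (N1 N2 C T1 T2 TC : lSemiModType A) (i1 : N1 -> C) (i2 : N2 -> C)
          (t1 : N1 -> M -> T1) (t2 : N2 -> M -> T2) (tC : C -> M -> TC)
          (i1' : T1 -> TC) (i2' : T2 -> TC),
     is_coproduct i1 i2 -> is_tensor t1 -> is_tensor t2 -> is_tensor tC ->
     tensor_map t1 tC i1 i1' -> tensor_map t2 tC i2 i2' ->
     is_coproduct i1' i2') /\
  (forall (N N' E TN TN' TE : lSemiModType A) (f g : N -> N') (e : E -> N)
          (tN : N -> M -> TN) (tN' : N' -> M -> TN') (tE : E -> M -> TE)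
          (f' g' : TN -> TN') (e' : TE -> TN),
     modhom f -> modhom g -> is_equalizer f g e ->
     is_tensor tN -> is_tensor tN' -> is_tensor tE ->
     tensor_map tN tN' f f' -> tensor_map tN tN' g g' -> tensor_map tE tN e e' ->
     is_equalizer f' g' e') /\
  (forall (N N' Q TN TN' TQ : lSemiModType A) (f g : N -> N') (q : N' -> Q)
          (tN : N -> M -> TN) (tN' : N' -> M -> TN') (tQ : Q -> M -> TQ)
          (f' g' : TN -> TN') (q' : TN' -> TQ),
     modhom f -> modhom g -> is_coequalizer f g q ->
     is_tensor tN -> is_tensor tN' -> is_tensor tQ ->
     tensor_map tN tN' f f' -> tensor_map tN tN' g g' -> tensor_map tN' tQ q q' ->
     is_coequalizer f' g' q').

End ModCat.

(* Main.v *)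
Require Import Defs.
From HB Require Import structures.
From mathcomp Require Import all_boot all_order all_algebra.
From mathcomp Require boolp.
Set Implicit Arguments. Unset Strict Implicit. Unset Printing Implicit Defensive.
Import GRing.Theory.
Local Open Scope ring_scope.
Section Gen.
Variable A : comPzSemiRingType.

Lemma modhom_sum (U V : lSemiModType A) (h : U -> V) (I : Type) (s : seq I) (F : I -> U) :
  modhom h -> h (\sum_(i <- s) F i) = \sum_(i <- s) h (F i).
Proof.
case=> h0 hD _; elim: s => [|x s IH]; first by rewrite !big_nil.
by rewrite !big_cons hD IH.
Qed.

Section Tens.
Variables U V : lSemiModType A.

Definition sumb (P : lSemiModType A) (b : U -> V -> P) (s : seq (U * V)) :=
  \sum_(p <- s) b p.1 p.2.

Definition Rt (s t : seq (U * V)) : Prop :=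
  forall (P : lSemiModType A) (b : U -> V -> P), Defs.bilinear b -> sumb b s = sumb b t.

Definition eqv (s : seq (U * V)) : pred (seq (U * V)) := fun t => boolp.asbool (Rt s t).
Definition canon (s : seq (U * V)) := choose (eqv s) s.

Lemma Rt_canon s : Rt s (canon s).
Proof.
apply/boolp.asboolP; rewrite /canon; apply: (@chooseP _ (eqv s) s); exact/boolp.asboolP.
Qed.

Lemma canon_eq s t : Rt s t -> canon s = canon t.
Proof.
move=> hst; rewrite /canon.
have e : eqv s =1 eqv t.
  move=> x; apply/boolp.asboolP/boolp.asboolP => h P b hb.
    by rewrite -(hst P b hb) (h P b hb).
  by rewrite (hst P b hb) (h P b hb).
rewrite (eq_choose e); apply: choose_id; apply/boolp.asboolP => // P b hb.
by rewrite hst.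
Qed.

Lemma canon_idem s : canon (canon s) == canon s.
Proof. by apply/eqP; symmetry; apply: canon_eq; apply: Rt_canon. Qed.

Definition Tens : Type := {x : seq (U * V) | canon x == x}.
HB.instance Definition _ := Choice.on Tens.

Definition cls (s : seq (U * V)) : Tens := exist _ (canon s) (canon_idem s).

Lemma clsK (z : Tens) : cls (val z) = z.
Proof. by apply: val_inj => /=; apply/eqP; case: z. Qed.

Lemma clsP s t : Rt s t -> cls s = cls t.
Proof. by move=> h; apply: val_inj; apply: canon_eq. Qed.

Lemma cls_inj s t : cls s = cls t -> Rt s t.
Proof.
move=> /(congr1 val) /= e P b hb.
by rewrite (Rt_canon s hb) e -(Rt_canon t hb).
Qed.

Lemma sumb_cls (P : lSemiModType A) (b : U -> V -> P) s : Defs.bilinear b -> sumb b (val (cls s)) = sumb b s.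
Proof. by move=> hb; rewrite /= -(Rt_canon s hb). Qed.

Lemma sumb_cat (P : lSemiModType A) (b : U -> V -> P) s t : sumb b (s ++ t) = sumb b s + sumb b t.
Proof. by rewrite /sumb big_cat. Qed.

Lemma sumb_nil (P : lSemiModType A) (b : U -> V -> P) : sumb b [::] = 0.
Proof. by rewrite /sumb big_nil. Qed.

Lemma sumb1 (P : lSemiModType A) (b : U -> V -> P) x y : sumb b [:: (x, y)] = b x y.
Proof. by rewrite /sumb big_seq1. Qed.

Definition scl (a : A) (s : seq (U * V)) := map (fun p => (a *: p.1, p.2)) s.

Lemma sumb_scl (P : lSemiModType A) (b : U -> V -> P) a s : Defs.bilinear b -> sumb b (scl a s) = a *: sumb b s.
Proof.
move=> [hb1 _]; rewrite /sumb big_map scaler_sumr; apply: eq_bigr => p _.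
by case: (hb1 p.2) => _ _ ->.
Qed.

Definition tzero : Tens := cls [::].
Definition tadd (z1 z2 : Tens) : Tens := cls (val z1 ++ val z2).
Definition tscale (a : A) (z : Tens) : Tens := cls (scl a (val z)).

Ltac simp hb := rewrite ?(sumb_cat, sumb_cls _ hb, sumb_scl _ _ hb, sumb_nil, sumb1).

Lemma taddA : associative tadd.
Proof. move=> x y z; apply: clsP => P b hb; simp hb; by rewrite addrA. Qed.
Lemma taddC : commutative tadd.
Proof. move=> x y; apply: clsP => P b hb; simp hb; by rewrite addrC. Qed.
Lemma tadd0 : left_id tzero tadd.
Proof. move=> x; rewrite -[RHS]clsK; apply: clsP => P b hb; simp hb; by rewrite add0r. Qed.

HB.instance Definition _ := GRing.isNmodule.Build Tens taddA taddC tadd0.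

Lemma tscaleA a b v : tscale a (tscale b v) = tscale (a * b) v.
Proof. apply: clsP => P c hc; simp hc; by rewrite scalerA. Qed.
Lemma tscale0 v : tscale 0 v = 0.
Proof. apply: clsP => P c hc; simp hc; by rewrite scale0r. Qed.
Lemma tscale1 : left_id 1 tscale.
Proof. move=> x; rewrite -[RHS]clsK; apply: clsP => P c hc; simp hc; by rewrite scale1r. Qed.
Lemma tscaleDr : right_distributive tscale +%R.
Proof. move=> a x y; apply: clsP => P c hc; simp hc; by rewrite scalerDr. Qed.
Lemma tscaleDl v : {morph tscale^~ v: a b / a + b}.
Proof. move=> a b; apply: clsP => P c hc; simp hc; by rewrite scalerDl. Qed.

HB.instance Definition _ := GRing.Nmodule_isLSemiModule.Build A Tens
  tscaleA tscale0 tscale1 tscaleDr tscaleDl.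

Lemma taddE (z1 z2 : Tens) : z1 + z2 = tadd z1 z2. Proof. by []. Qed.
Lemma tzeroE : (0 : Tens) = tzero. Proof. by []. Qed.
Lemma tscaleE a (z : Tens) : a *: z = tscale a z. Proof. by []. Qed.

Definition tens (x : U) (y : V) : Tens := cls [:: (x, y)].

Lemma cls_sum s : cls s = \sum_(p <- s) tens p.1 p.2.
Proof.
elim: s => [|p s IH]; first by rewrite big_nil.
rewrite big_cons -IH; apply: clsP => P c hc.
simp hc; by rewrite /sumb big_cons.
Qed.

Lemma tens_tensor : is_tensor tens.
Proof.
split.
  split=> [y|x]; (split; [| move=> ? ? | move=> ? ?]); apply: clsP => P c hc; simp hc;
    case: hc => hc1 hc2.
  - by case: (hc1 y).
  - by case: (hc1 y).
  - by case: (hc1 y).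
  - by case: (hc2 x).
  - by case: (hc2 x).
  - by case: (hc2 x).
move=> P b hb; split.
  exists (fun z => sumb b (val z)); split; last by move=> x y; rewrite sumb_cls // sumb1.
  split=> [|x y|a x]; rewrite ?tzeroE ?taddE ?tscaleE /tzero /tadd /tscale sumb_cls //.
  - by rewrite sumb_nil.
  - by rewrite sumb_cat.
  - by rewrite sumb_scl.
move=> h h' hh hh' e e' z.
rewrite -(clsK z) cls_sum (modhom_sum _ _ hh) (modhom_sum _ _ hh').
by apply: eq_bigr => p _; rewrite e e'.
Qed.

End Tens.
End Gen.
Section Eqz.
Variables (A : comPzSemiRingType) (n : nat).

Definition dot (y x : 'rV[A]_n) : A := \sum_(i < n) y 0 i * x 0 i.

Lemma dot0l x : dot 0 x = 0.
Proof. by rewrite /dot big1 // => i _; rewrite mxE mul0r. Qed.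
Lemma dot0r y : dot y 0 = 0.
Proof. by rewrite /dot big1 // => i _; rewrite mxE mulr0. Qed.
Lemma dotDl y y' x : dot (y + y') x = dot y x + dot y' x.
Proof. by rewrite /dot -big_split; apply: eq_bigr => i _; rewrite mxE mulrDl. Qed.
Lemma dotDr y x x' : dot y (x + x') = dot y x + dot y x'.
Proof. by rewrite /dot -big_split; apply: eq_bigr => i _; rewrite mxE mulrDr. Qed.
Lemma dotZl a y x : dot (a *: y) x = a * dot y x.
Proof. by rewrite /dot mulr_sumr; apply: eq_bigr => i _; rewrite mxE mulrA. Qed.
Lemma dotZr a y x : dot y (a *: x) = a * dot y x.
Proof. by rewrite /dot mulr_sumr; apply: eq_bigr => i _; rewrite mxE mulrCA. Qed.
Lemma dot_deltal i x : dot (delta_mx 0 i) x = x 0 i.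
Proof.
rewrite /dot (bigD1 i) //= big1 ?addr0; first by rewrite mxE !eqxx mul1r.
by move=> j hj; rewrite mxE (negbTE hj) mul0r.
Qed.

Variables p q : 'rV[A]_n.
Definition Eqz : Type := {y : 'rV[A]_n | dot y p == dot y q}.
HB.instance Definition _ := Choice.on Eqz.

Lemma ez_p : dot 0 p == dot 0 q. Proof. by rewrite !dot0l. Qed.
Definition ezero : Eqz := exist _ 0 ez_p.
Lemma eadd_p (y y' : Eqz) : dot (val y + val y') p == dot (val y + val y') q.
Proof. by rewrite !dotDl (eqP (valP y)) (eqP (valP y')). Qed.
Definition eadd (y y' : Eqz) : Eqz := exist (fun y => dot y p == dot y q) _ (eadd_p y y').
Lemma escale_p a (y : Eqz) : dot (a *: val y) p == dot (a *: val y) q.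
Proof. by rewrite !dotZl (eqP (valP y)). Qed.
Definition escale a (y : Eqz) : Eqz := exist (fun y => dot y p == dot y q) _ (escale_p a y).

Lemma eaddA : associative eadd.
Proof. by move=> x y z; apply: val_inj; rewrite /= addrA. Qed.
Lemma eaddC : commutative eadd.
Proof. by move=> x y; apply: val_inj; rewrite /= addrC. Qed.
Lemma eadd0 : left_id ezero eadd.
Proof. by move=> x; apply: val_inj; rewrite /= add0r. Qed.
HB.instance Definition _ := GRing.isNmodule.Build Eqz eaddA eaddC eadd0.

Lemma escaleA a b v : escale a (escale b v) = escale (a * b) v.
Proof. by apply: val_inj; rewrite /= scalerA. Qed.
Lemma escale0 v : escale 0 v = 0.
Proof. by apply: val_inj; rewrite /= scale0r. Qed.
Lemma escale1 : left_id 1 escale.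
Proof. by move=> v; apply: val_inj; rewrite /= scale1r. Qed.
Lemma escaleDr : right_distributive escale +%R.
Proof. by move=> a x y; apply: val_inj; rewrite /= scalerDr. Qed.
Lemma escaleDl v : {morph escale^~ v: a b / a + b}.
Proof. by move=> a b; apply: val_inj; rewrite /= scalerDl. Qed.
HB.instance Definition _ := GRing.Nmodule_isLSemiModule.Build A Eqz
  escaleA escale0 escale1 escaleDr escaleDl.

Definition eval (y : Eqz) : 'rV[A]_n := val y.
Lemma eval_hom : modhom eval.
Proof. by []. Qed.

Definition Fm (r : 'rV[A]_n) (y : 'rV[A]_n) : A^o := dot y r.
Lemma Fm_hom r : modhom (Fm r).
Proof.
split=> [|x y|a x]; rewrite /Fm ?dot0l ?dotDl ?dotZl //.
Qed.

Lemma eq_equalizer : is_equalizer (Fm p) (Fm q) eval.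
Proof.
split; first exact: eval_hom.
  by move=> x; apply/eqP; exact: (valP x).
move=> X k hk hkFG; split.
  exists (fun x => exist (fun y => dot y p == dot y q) (k x) (introT eqP (hkFG x)) : Eqz); split => //.
  case: hk => h0 hD hZ; split=> [|x y|a x]; apply: val_inj => /=; by rewrite ?h0 ?hD ?hZ.
by move=> h h' _ _ e e' x; apply: val_inj; rewrite -/(eval _) -/(eval (h' x)) e e'.
Qed.
End Eqz.
Lemma tmap_ex (A : comPzSemiRingType) (U U' M T T' : lSemiModType A)
  (t : U -> M -> T) (t' : U' -> M -> T') (f : U -> U') :
  is_tensor t -> is_tensor t' -> modhom f -> exists h, tensor_map t t' f h.
Proof.
case=> _ hu [[ht'1 ht'2] _] [f0 fD fZ].
have hb : Defs.bilinear (fun x y => t' (f x) y).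
  split=> [y|x]; last exact: ht'2.
  case: (ht'1 y) => a b c; split=> [|x x'|r x]; by rewrite ?f0 ?fD ?fZ.
by case: (hu _ _ hb) => [[h [hh he]] _]; exists h.
Qed.

Theorem mainTheorem5 (A : comPzSemiRingType) (M : lSemiModType A) (n : nat)
  (v : 'rV[A]_n -> M) (f g : A^o -> 'rV[A]_n) :
  flat M -> modhom v -> modhom f -> modhom g ->
  (forall a, v (f a) = v (g a)) ->
  exists (m : nat) (u : 'rV[A]_n -> 'rV[A]_m) (w : 'rV[A]_m -> M),
    [/\ modhom u, modhom w, (forall x, v x = w (u x)) & (forall a, u (f a) = u (g a))].
Proof.
move=> hflat hv hf hg hvfg.
set p := f 1; set q := g 1.
have fE : forall a, f a = a *: p.
  move=> a; case: hf => _ _ hZ; rewrite /p -hZ; congr f; exact: (esym (mulr1 a)).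
have gE : forall a, g a = a *: q.
  move=> a; case: hg => _ _ hZ; rewrite /q -hZ; congr g; exact: (esym (mulr1 a)).
have vE : forall x, v x = \sum_(i < n) x 0 i *: v (delta_mx 0 i).
  move=> x; rewrite {1}(row_sum_delta x) (modhom_sum _ _ hv).
  by apply: eq_bigr => i _; case: hv => _ _ ->.
case: hflat => _ [_ [_ [_ [heq _]]]].
have tN := tens_tensor ('rV[A]_n) M.
have tN' := tens_tensor (A^o) M.
have tE := tens_tensor (Eqz p q) M.
have [F' hF'] := tmap_ex tN tN' (Fm_hom p).
have [G' hG'] := tmap_ex tN tN' (Fm_hom q).
have [e' he'] := tmap_ex tE tN (@eval_hom A n p q).
have := heq _ _ _ _ _ _ _ _ _ _ _ _ _ _ _ (Fm_hom p) (Fm_hom q) (eq_equalizer p q)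
  tN tN' tE hF' hG' he'.
case=> _ _ hU.
pose z : Tens ('rV[A]_n) M := \sum_(i < n) tens (delta_mx 0 i) (v (delta_mx 0 i)).
have t1 : forall (a : A^o) (mm : M), tens a mm = tens (1 : A^o) (a *: mm).
  move=> a mm; case: tN' => [[b1 b2] _].
  case: (b2 (1 : A^o)) => _ _ ->; case: (b1 mm) => _ _ <-.
  by congr tens; exact: (esym (mulr1 a)).
have FE : forall r (H : Tens ('rV[A]_n) M -> Tens (A^o) M),
     (forall x y, H (tens x y) = tens (Fm r x) y) ->
     modhom H -> H z = tens (1 : A^o) (v r).
  move=> r H hr hm; rewrite (modhom_sum _ _ hm) (vE r).
  case: tN' => [[_ b2] _].
  rewrite (modhom_sum _ _ (b2 (1 : A^o))); apply: eq_bigr => i _.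
  by rewrite hr /Fm dot_deltal t1.
have hz : F' z = G' z.
  case: hF' => hF1 hF2; case: hG' => hG1 hG2.
  by rewrite (FE p _ hF2 hF1) (FE q _ hG2 hG1) hvfg.
pose k := fun a : A^o => (a : A) *: z.
have hk : modhom k.
  split=> [|x y|a x]; rewrite /k ?scale0r ?scalerDl ?scalerA //.
have hkFG : forall a, F' (k a) = G' (k a).
  move=> a; case: hF' => [[_ _ ->] _]; case: hG' => [[_ _ ->] _]; by rewrite hz.
case: (hU _ k hk hkFG) => [[h [hh he]] _].
set t := h 1.
have ez : e' t = z by rewrite /t he /k scale1r.
set s := val t.
have zs : z = \sum_(pp <- s) tens (val pp.1) pp.2.
  rewrite -ez -(clsK t) cls_sum; case: he' => hem hee.
  rewrite (modhom_sum _ _ hem); apply: eq_bigr => pp _; by rewrite hee.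
pose y := fun j => val (nth (0, 0) s j).1.
pose mm := fun j => (nth (0, 0) s j).2.
pose u := fun x : 'rV[A]_n => \row_(j < size s) dot (y j) x.
pose w := fun c : 'rV[A]_(size s) => \sum_(j < size s) c 0 j *: mm j.
have hu : modhom u.
  split=> [|x x'|a x]; apply/rowP => j; rewrite !mxE ?dot0r ?dotDr ?dotZr //.
exists (size s), u, w; split => //.
- split=> [|c c'|a c]; rewrite /w.
  + by rewrite big1 // => j _; rewrite mxE scale0r.
  + by rewrite -big_split; apply: eq_bigr => j _; rewrite mxE scalerDl.
  + by rewrite scaler_sumr; apply: eq_bigr => j _; rewrite mxE scalerA.
- move=> x.
  have hb : Defs.bilinear (fun (yy : 'rV[A]_n) (m0 : M) => dot yy x *: m0).
    split=> [m0|yy]; split=> [|a b|a b]; rewrite ?dot0l ?dotDl ?dotZl ?scale0r ?scalerDl ?scalerA //.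
    + by rewrite scaler0.
    + by rewrite scalerDr.
    + by rewrite mulrC.
  case: tN => _ /(_ _ _ hb) [[hx [hxm hxe]] _].
  have := congr1 hx zs.
  rewrite /z !(modhom_sum _ _ hxm).
  under eq_bigr do rewrite hxe dot_deltal.
  under [RHS]eq_bigr do rewrite hxe.
  move=> e; rewrite vE e.
  rewrite (big_nth (0, 0)) big_mkord /w /u; apply: eq_bigr => j _.
  by rewrite mxE.
- move=> a; rewrite fE gE; have [_ _ huZ] := hu; rewrite !huZ; congr (_ *: _).
  apply/rowP => j; rewrite !mxE; apply/eqP; exact: (valP (nth (0, 0) s j).1).
Qed.
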